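(* (Provably in $\mathsf{Z}^-_{\mathrm{FTM}\omega}$.) Let $U,V$ be any sets. Then $U\times V$ is a set, and the collection $\mathcal P_{\mathrm{fin}}(U)$ of all finite subsets of $U$ and the collection $U^{<\omega}$ of all finite sequences of elements of $U$ are sets as well.
   Context: $\mathsf{Z}^-_{\mathrm{FTM}\omega}$ is Zermelo set theory without Power Set and Choice (Extensionality, Pairing, Union, Infinity, Regularity, Separation) plus: (FC) every set $X$ has a superset $Y$ such that every finite $x\subseteq Y$ belongs to $Y$; (TS) every set has a transitive superset; (MC) every set binary relation $A$ that is well-founded and extensional admits a transitive set $X$ and a bijection $\eta$ from its field onto $X$ with $jAk\iff\eta(j)\in\eta(k)$; (Count) every set admits an injection into $\omega$. *)

(* Defs.v *)
(* A model of set theory is a type M with a membership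
   relation mem; all set-theoretic notions below are defined internally
   (as properties of elements of M), and the axioms of Z^-_{FTM omega} are
   stated first-order (Separation via a syntax of first-order formulas). *)
From Stdlib Require Import Arith.

Set Implicit Arguments.

Section SetTheory.
Variable M : Type.
Variable mem : M -> M -> Prop.
Local Infix "∈" := mem (at level 70).

(* de Bruijn variables; FAll binds variable 0 *)
Inductive form : Type :=
| FMem : nat -> nat -> form
| FEq  : nat -> nat -> form
| FFalse : form
| FImp : form -> form -> form
| FAll : form -> form.

Definition scons (x : M) (e : nat -> M) : nat -> M :=
  fun n => match n with 0 => x | S k => e k end.

Fixpoint sat (e : nat -> M) (p : form) : Prop :=
  match p with
  | FMem i j => e i ∈ e j
  | FEq i j => e i = e j
  | FFalse => False
  | FImp p q => sat e p -> sat e q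
  | FAll p => forall x, sat (scons x e) p
  end.

Definition subset (a b : M) : Prop := forall z, z ∈ a -> z ∈ b.
Definition is_empty (e : M) : Prop := forall z, ~ z ∈ e.
Definition is_upair (s a b : M) : Prop := forall z, z ∈ s <-> z = a \/ z = b.
Definition is_opair (p a b : M) : Prop :=
  forall z, z ∈ p <-> is_upair z a a \/ is_upair z a b.
Definition is_succ (s x : M) : Prop := forall z, z ∈ s <-> z ∈ x \/ z = x.
Definition inductive (I : M) : Prop :=
  (exists e, is_empty e /\ e ∈ I) /\
  (forall x, x ∈ I -> forall s, is_succ s x -> s ∈ I).
Definition in_omega (n : M) : Prop := forall I, inductive I -> n ∈ I.
Definition transitive_set (X : M) : Prop := forall y, y ∈ X -> forall z, z ∈ y -> z ∈ X.

Definition fapp (f x y : M) : Prop := exists p, p ∈ f /\ is_opair p x y.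
Definition is_function (f : M) : Prop :=
  (forall p, p ∈ f -> exists a b, is_opair p a b) /\
  (forall a b b', fapp f a b -> fapp f a b' -> b = b').
Definition fun_dom_is (f D : M) : Prop :=
  is_function f /\ forall x, x ∈ D <-> exists y, fapp f x y.
Definition fun_injective (f : M) : Prop :=
  forall a a' b, fapp f a b -> fapp f a' b -> a = a'.
Definition bijection (f D R : M) : Prop :=
  fun_dom_is f D /\ fun_injective f /\ (forall y, y ∈ R <-> exists x, fapp f x y).

Definition finite_set (x : M) : Prop :=
  exists n f, in_omega n /\ bijection f n x.

Definition rel_holds (A j k : M) : Prop := exists p, p ∈ A /\ is_opair p j k.
Definition is_relation (A : M) : Prop := forall p, p ∈ A -> exists a b, is_opair p a b.
Definition in_field (A j : M) : Prop := exists k, rel_holds A j k \/ rel_holds A k j.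
Definition rel_well_founded (A : M) : Prop :=
  forall S, (forall s, s ∈ S -> in_field A s) -> (exists s, s ∈ S) ->
    exists m, m ∈ S /\ forall k, k ∈ S -> ~ rel_holds A k m.
Definition rel_extensional (A : M) : Prop :=
  forall j k, in_field A j -> in_field A k ->
    (forall i, rel_holds A i j <-> rel_holds A i k) -> j = k.

Definition Z_minus_FTMw : Prop :=
  (forall a b, (forall z, z ∈ a <-> z ∈ b) -> a = b) /\
  (forall a b, exists s, is_upair s a b) /\
  (forall a, exists u, forall z, z ∈ u <-> exists y, y ∈ a /\ z ∈ y) /\
  (exists I, inductive I) /\
  (forall a, (exists x, x ∈ a) -> exists m, m ∈ a /\ forall z, z ∈ m -> ~ z ∈ a) /\
  (forall (phi : form) (env : nat -> M) a,
      exists b, forall x, x ∈ b <-> x ∈ a /\ sat (scons x env) phi) /\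
  (forall X, exists Y, subset X Y /\
      forall x, subset x Y -> finite_set x -> x ∈ Y) /\
  (forall X, exists Y, subset X Y /\ transitive_set Y) /\
  (* MC (Mostowski collapse): eta is a bijection from the field of A onto a
     transitive set X with  j A k <-> eta(j) ∈ eta(k) *)
  (forall A, is_relation A -> rel_well_founded A -> rel_extensional A ->
     exists X eta, transitive_set X /\ is_function eta /\
       (forall x, in_field A x <-> exists y, fapp eta x y) /\
       fun_injective eta /\
       (forall y, y ∈ X <-> exists x, fapp eta x y) /\
       (forall j k y z, fapp eta j y -> fapp eta k z ->
          (rel_holds A j k <-> y ∈ z))) /\
  (forall X, exists f, is_function f /\
       (forall x, x ∈ X <-> exists y, fapp f x y) /\
       fun_injective f /\
       (forall x y, fapp f x y -> in_omega y)).

End SetTheory.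

(* Main.v *)
Require Import Defs.
From Stdlib Require Import Setoid Classical.

Section S.
Variable M : Type.
Variable mem : M -> M -> Prop.
Local Infix "∈" := mem (at level 70).

Definition tl (e : nat -> M) : nat -> M := fun n => e (S n).
Definition Definable (P : (nat -> M) -> Prop) :=
  exists phi, forall e, sat mem e phi <-> P e.
Definition isvar (t : (nat -> M) -> M) := exists i, forall e, t e = e i.

Lemma def_mem t1 t2 : isvar t1 -> isvar t2 -> Definable (fun e => t1 e ∈ t2 e).
Proof. intros [i Hi] [j Hj]. exists (FMem i j). intro e. simpl. rewrite Hi, Hj. tauto. Qed.
Lemma def_eq t1 t2 : isvar t1 -> isvar t2 -> Definable (fun e => t1 e = t2 e).
Proof. intros [i Hi] [j Hj]. exists (FEq i j). intro e. simpl. rewrite Hi, Hj. tauto. Qed.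
Lemma def_False : Definable (fun _ => False).
Proof. exists FFalse. simpl. tauto. Qed.
Lemma def_True : Definable (fun _ => True).
Proof. exists (FImp FFalse FFalse). simpl. tauto. Qed.
Lemma def_imp A B : Definable A -> Definable B -> Definable (fun e => A e -> B e).
Proof. intros [p Hp] [q Hq]. exists (FImp p q). intro e. simpl.
  specialize (Hp e); specialize (Hq e). tauto. Qed.
Lemma def_not A : Definable A -> Definable (fun e => ~ A e).
Proof. intros [p Hp]. exists (FImp p FFalse). intro e. simpl.
  specialize (Hp e). tauto. Qed.
Definition fand p q := FImp (FImp p (FImp q FFalse)) FFalse.
Lemma sat_and e p q : sat mem e (fand p q) <-> sat mem e p /\ sat mem e q.
Proof. simpl. destruct (classic (sat mem e p)); destruct (classic (sat mem e q)); tauto. Qed.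
Lemma def_and A B : Definable A -> Definable B -> Definable (fun e => A e /\ B e).
Proof. intros [p Hp] [q Hq]. exists (fand p q). intro e. rewrite sat_and.
  specialize (Hp e); specialize (Hq e). tauto. Qed.
Lemma def_or A B : Definable A -> Definable B -> Definable (fun e => A e \/ B e).
Proof. intros [p Hp] [q Hq]. exists (FImp (FImp p FFalse) q). intro e. simpl.
  specialize (Hp e); specialize (Hq e).
  destruct (classic (A e)); tauto. Qed.
Lemma def_iff A B : Definable A -> Definable B -> Definable (fun e => A e <-> B e).
Proof. intros [p Hp] [q Hq]. exists (fand (FImp p q) (FImp q p)). intro e. rewrite sat_and.
  simpl. specialize (Hp e); specialize (Hq e). tauto. Qed.
Lemma def_all (B : (nat -> M) -> M -> Prop) :
  Definable (fun e => B (tl e) (e 0)) -> Definable (fun e => forall x, B e x).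
Proof. intros [p Hp]. exists (FAll p). intro e. simpl. split.
  - intros H x. apply (Hp (scons x e)). apply H.
  - intros H x. apply (Hp (scons x e)). apply H. Qed.
Lemma def_ex (B : (nat -> M) -> M -> Prop) :
  Definable (fun e => B (tl e) (e 0)) -> Definable (fun e => exists x, B e x).
Proof. intros [p Hp]. exists (FImp (FAll (FImp p FFalse)) FFalse). intro e. simpl. split.
  - intros H. apply NNPP. intro Hn. apply H. intros x Hx.
    apply Hn. exists x. apply (Hp (scons x e)). exact Hx.
  - intros [x Hx] H. apply (H x). apply (Hp (scons x e)). exact Hx. Qed.

Ltac isvar_tac := eexists; intro; reflexivity.
Ltac dtac := repeat (cbv beta; first
  [ apply def_True | apply def_False
  | apply def_iff | apply def_and | apply def_or | apply def_not | apply def_imp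
  | apply def_all | apply def_ex
  | apply def_mem; isvar_tac | apply def_eq; isvar_tac ]).
Ltac unf := unfold finite_set, in_omega, inductive, is_empty, is_succ, bijection,
  fun_dom_is, is_function, fapp, is_opair, is_upair, fun_injective, subset.


Hypothesis Hext : forall a b, (forall z, z ∈ a <-> z ∈ b) -> a = b.
Hypothesis Hpair : forall a b, exists s, is_upair mem s a b.
Hypothesis Hunion : forall a, exists u, forall z, z ∈ u <-> exists y, y ∈ a /\ z ∈ y.
Hypothesis Hinf : exists I, inductive mem I.
Hypothesis Hreg : forall a, (exists x, x ∈ a) -> exists m, m ∈ a /\ forall z, z ∈ m -> ~ z ∈ a.
Hypothesis Hsep : forall (phi : form) (env : nat -> M) a,
      exists b, forall x, x ∈ b <-> x ∈ a /\ sat mem (scons x env) phi.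
Hypothesis Hfc : forall X, exists Y, subset mem X Y /\
      forall x, subset mem x Y -> finite_set mem x -> x ∈ Y.
Hypothesis Hts : forall X, exists Y, subset mem X Y /\ transitive_set mem Y.

Lemma sepP P (HP : Definable P) env a :
  exists b, forall x, x ∈ b <-> x ∈ a /\ P (scons x env).
Proof. destruct HP as [phi Hphi]. destruct (Hsep phi env a) as [b Hb].
  exists b. intro x. rewrite (Hb x), (Hphi (scons x env)). tauto. Qed.

Lemma upair_unique s t a b : is_upair mem s a b -> is_upair mem t a b -> s = t.
Proof. intros Hs Ht. apply Hext. intro z. rewrite (Hs z), (Ht z). tauto. Qed.

Lemma opair_unique p q a b : is_opair mem p a b -> is_opair mem q a b -> p = q.
Proof. intros Hs Ht. apply Hext. intro z. rewrite (Hs z), (Ht z). tauto. Qed.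

Lemma opair_ex a b : exists p, is_opair mem p a b.
Proof.
  destruct (Hpair a a) as [s1 H1]; destruct (Hpair a b) as [s2 H2];
  destruct (Hpair s1 s2) as [p Hp]. exists p. intro z. rewrite (Hp z). split.
  - intros [-> | ->]; [left|right]; assumption.
  - intros [Hz|Hz]; [left|right]; eapply upair_unique; eassumption.
Qed.

Lemma opair_inj p a b a' b' : is_opair mem p a b -> is_opair mem p a' b' -> a = a' /\ b = b'.
Proof.
  intros Hp Hq.
  destruct (Hpair a a) as [s Hs].
  assert (Hsp : s ∈ p) by (apply Hp; left; exact Hs).
  apply Hq in Hsp.
  assert (a' = a) as Ha.
  { assert (a' ∈ s) as Ha's by (destruct Hsp as [H|H]; apply H; left; reflexivity).
    apply Hs in Ha's. tauto. }
  subst a'. split; [reflexivity|].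
  destruct (Hpair a b) as [t Ht].
  assert (Htp : t ∈ p) by (apply Hp; right; exact Ht).
  apply Hq in Htp.
  assert (Hbt : b ∈ t) by (apply Ht; right; reflexivity).
  assert (b = a \/ b = b') as Hb by (destruct Htp as [H|H]; apply H in Hbt; tauto).
  destruct Hb as [Hb|Hb]; [|exact Hb]. subst b.
  destruct (Hpair a b') as [t' Ht'].
  assert (Htp' : t' ∈ p) by (apply Hq; right; exact Ht').
  apply Hp in Htp'.
  assert (Hbt' : b' ∈ t') by (apply Ht'; right; reflexivity).
  destruct Htp' as [H|H]; apply H in Hbt'; destruct Hbt'; congruence.
Qed.

Lemma union2_ex a b : exists u, forall z, z ∈ u <-> z ∈ a \/ z ∈ b.
Proof.
  destruct (Hpair a b) as [s Hs]. destruct (Hunion s) as [u Hu].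
  exists u. intro z. rewrite (Hu z). split.
  - intros [y [Hy Hzy]]. apply Hs in Hy. destruct Hy; subst; tauto.
  - intros [H|H]; eexists; (split; [apply Hs|]); [left; reflexivity| exact H
      | right; reflexivity | exact H].
Qed.

Lemma empty_ex : exists e, is_empty mem e.
Proof. destruct Hinf as [I [[e [He _]] _]]. exists e. exact He. Qed.

Lemma in_omega_empty e : is_empty mem e -> in_omega mem e.
Proof.
  intros He I [[e' [He' Hin]] _].
  replace e with e'; [exact Hin|].
  apply Hext. intro z. split; intro H; [destruct (He' z H)|destruct (He z H)].
Qed.

Lemma succ_ex x : exists s, is_succ mem s x.
Proof.
  destruct (Hpair x x) as [sx Hsx]. destruct (union2_ex x sx) as [u Hu].
  exists u. intro z. rewrite (Hu z), (Hsx z). tauto.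
Qed.

Lemma in_omega_succ n s : in_omega mem n -> is_succ mem s n -> in_omega mem s.
Proof. intros Hn Hs I HI. exact (proj2 HI n (Hn I HI) s Hs). Qed.

Lemma not_self x : ~ x ∈ x.
Proof.
  intro Hx. destruct (Hpair x x) as [s Hs].
  destruct (Hreg s) as [m [Hm Hmin]].
  { exists x. apply Hs. left; reflexivity. }
  apply Hs in Hm. assert (m = x) by tauto. subst m.
  apply (Hmin x Hx). apply Hs. left; reflexivity.
Qed.

Lemma finite_empty e : is_empty mem e -> finite_set mem e.
Proof.
  intro He. exists e, e. split; [apply in_omega_empty; exact He|].
  assert (Hf : forall a b, ~ fapp mem e a b) by (intros a b [p [Hp _]]; exact (He p Hp)).
  split; [split; [split|]|split].
  - intros p Hp. destruct (He p Hp).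
  - intros a b b' H. destruct (Hf _ _ H).
  - intro x. split; [intro H; destruct (He x H)|intros [y H]; destruct (Hf _ _ H)].
  - intros a a' b H. destruct (Hf _ _ H).
  - intro y. split; [intro H; destruct (He y H)|intros [x H]; destruct (Hf _ _ H)].
Qed.

Lemma finite_add x a s : finite_set mem x -> ~ a ∈ x ->
  (forall z, z ∈ s <-> z ∈ x \/ z = a) -> finite_set mem s.
Proof.
  intros [n [f [Hn [[[Hf1 Hf2] Hdom] [Hinj Hrng]]]]] Ha Hs.
  destruct (succ_ex n) as [n' Hn'].
  destruct (opair_ex n a) as [q Hq].
  destruct (Hpair q q) as [sq Hsq].
  destruct (union2_ex f sq) as [f' Hf'].
  assert (Happ : forall u v, fapp mem f' u v <-> fapp mem f u v \/ (u = n /\ v = a)).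
  { intros u v. split.
    - intros [p [Hp Hpo]]. apply Hf' in Hp. destruct Hp as [Hp|Hp].
      + left. exists p. tauto.
      + right. apply Hsq in Hp. assert (p = q) as -> by tauto.
        destruct (opair_inj _ _ _ _ _ Hq Hpo). split; congruence.
    - intros [[p [Hp Hpo]]|[-> ->]].
      + exists p. split; [apply Hf'; left; exact Hp|exact Hpo].
      + exists q. split; [apply Hf'; right; apply Hsq; left; reflexivity|exact Hq]. }
  assert (Hnn : forall y, ~ fapp mem f n y).
  { intros y H. apply (not_self n). apply Hdom. exists y. exact H. }
  exists n', f'. split; [eapply in_omega_succ; eassumption|].
  split; [split; [split|]|split].
  - intros p Hp. apply Hf' in Hp. destruct Hp as [Hp|Hp]; [exact (Hf1 p Hp)|].
    apply Hsq in Hp. assert (p = q) as -> by tauto. exists n, a. exact Hq.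
  - intros u v v' H1 H2. apply Happ in H1. apply Happ in H2.
    destruct H1 as [H1|[-> ->]]; destruct H2 as [H2|[E ->]].
    + exact (Hf2 _ _ _ H1 H2).
    + subst u. destruct (Hnn _ H1).
    + destruct (Hnn _ H2).
    + reflexivity.
  - intro u. rewrite (Hn' u). split.
    + intros [Hu| ->].
      * apply Hdom in Hu. destruct Hu as [y Hy]. exists y. apply Happ. left; exact Hy.
      * exists a. apply Happ. right; split; reflexivity.
    + intros [y Hy]. apply Happ in Hy. destruct Hy as [Hy|[-> _]]; [left|right; reflexivity].
      apply Hdom. exists y. exact Hy.
  - intros u u' v H1 H2. apply Happ in H1. apply Happ in H2.
    destruct H1 as [H1|[-> ->]]; destruct H2 as [H2|[-> E]].
    + exact (Hinj _ _ _ H1 H2).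
    + subst v. exfalso. apply Ha. apply Hrng. exists u. exact H1.
    + exfalso. apply Ha. apply Hrng. exists u'. exact H2.
    + reflexivity.
  - intro y. rewrite (Hs y). split.
    + intros [Hy| ->].
      * apply Hrng in Hy. destruct Hy as [u Hu]. exists u. apply Happ. left; exact Hu.
      * exists n. apply Happ. right; split; reflexivity.
    + intros [u Hu]. apply Happ in Hu. destruct Hu as [Hu|[_ ->]]; [left|right; reflexivity].
      apply Hrng. exists u. exact Hu.
Qed.

Lemma finite_pair s a b : is_upair mem s a b -> finite_set mem s.
Proof.
  intro Hs. destruct empty_ex as [e He].
  destruct (Hpair a a) as [s1 Hs1].
  assert (F1 : finite_set mem s1).
  { apply (finite_add e a s1 (finite_empty e He) (He a)).
    intro z. rewrite (Hs1 z). split; [intros [H|H]; right; exact H|].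
    intros [H|H]; [destruct (He z H)|left; exact H]. }
  destruct (classic (b = a)) as [Eb|Nb].
  - subst b. replace s with s1; [exact F1|]. eapply upair_unique; eassumption.
  - apply (finite_add s1 b s F1).
    + intro H. apply Hs1 in H. tauto.
    + intro z. rewrite (Hs z), (Hs1 z). tauto.
Qed.

Section Closure.
Variable Y : M.
Hypothesis HY : forall x, subset mem x Y -> finite_set mem x -> x ∈ Y.

Lemma upair_in s a b : a ∈ Y -> b ∈ Y -> is_upair mem s a b -> s ∈ Y.
Proof.
  intros Ha Hb Hs. apply HY; [|eapply finite_pair; eassumption].
  intros z Hz. apply Hs in Hz. destruct Hz as [->| ->]; assumption.
Qed.

Lemma opair_in p a b : a ∈ Y -> b ∈ Y -> is_opair mem p a b -> p ∈ Y.
Proof.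
  intros Ha Hb Hp.
  destruct (Hpair a a) as [s1 Hs1]; destruct (Hpair a b) as [s2 Hs2].
  assert (Hu : is_upair mem p s1 s2).
  { intro z. rewrite (Hp z). split.
    - intros [H|H]; [left|right]; eapply upair_unique; eassumption.
    - intros [-> | ->]; [left|right]; assumption. }
  apply (upair_in p s1 s2); [eapply upair_in with (a := a) (b := a)
     |eapply upair_in with (a := a) (b := b)|]; eassumption.
Qed.
End Closure.

Lemma fun_finite z n : in_omega mem n -> fun_dom_is mem z n -> finite_set mem z.
Proof.
  intros Hn [[Hz1 Hz2] Hzd].
  destruct (union2_ex n z) as [X' HX'].
  destruct (Hfc X') as [Y' [HXY' HY']].
  destruct (sepP (fun e => exists k p y, p ∈ e 1 /\ is_opair mem p k y /\ is_opair mem (e 0) k p))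
    with (env := fun _ : nat => z) (a := Y') as [g Hg].
  { unf. dtac. }
  assert (Hclaim : forall k p, fapp mem g k p <-> exists y, p ∈ z /\ is_opair mem p k y).
  { intros k p. split.
    - intros [q [Hq Hqo]]. apply Hg in Hq. destruct Hq as [_ [k' [p' [y [Hp' [Hpo Hqo']]]]]].
      destruct (opair_inj _ _ _ _ _ Hqo Hqo'). subst k' p'. exists y. tauto.
    - intros [y [Hp Hpo]]. destruct (opair_ex k p) as [q Hq]. exists q. split; [|exact Hq].
      apply Hg. split.
      + apply (opair_in Y' HY' q k p); [| |exact Hq]; apply HXY', HX'.
        * left. apply Hzd. exists y. exists p. tauto.
        * right. exact Hp.
      + exists k, p, y. tauto. }
  exists n, g. split; [exact Hn|].
  split; [split; [split|]|split].
  - intros q Hq. apply Hg in Hq. destruct Hq as [_ [k [p [_ [_ [_ Hq]]]]]]. exists k, p. exact Hq.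
  - intros k p p' H1 H2. apply Hclaim in H1. apply Hclaim in H2.
    destruct H1 as [y [Hp Hpo]]. destruct H2 as [y' [Hp' Hpo']].
    assert (y = y') as <-.
    { apply (Hz2 k); [exists p|exists p']; tauto. }
    eapply opair_unique; eassumption.
  - intro x. split.
    + intro Hx. apply Hzd in Hx. destruct Hx as [y [p [Hp Hpo]]]. exists p. apply Hclaim. exists y. tauto.
    + intros [p Hp]. apply Hclaim in Hp. destruct Hp as [y Hy]. apply Hzd. exists y, p. tauto.
  - intros a a' p H1 H2. apply Hclaim in H1. apply Hclaim in H2.
    destruct H1 as [y [_ Hpo]]. destruct H2 as [y' [_ Hpo']].
    exact (proj1 (opair_inj _ _ _ _ _ Hpo Hpo')).
  - intro p. split.
    + intro Hp. destruct (Hz1 p Hp) as [a [b Hab]]. exists a. apply Hclaim. exists b. tauto.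
    + intros [a Ha]. apply Hclaim in Ha. destruct Ha as [y Hy]. tauto.
Qed.

End S.


Ltac unf' := unfold finite_set, in_omega, inductive, is_empty, is_succ, bijection,
  fun_dom_is, is_function, fapp, is_opair, is_upair, fun_injective, subset.
Ltac isvar_tac' := eexists; intro; reflexivity.
Ltac dtac' := repeat (cbv beta; first
  [ apply def_True | apply def_False
  | apply def_iff | apply def_and | apply def_or | apply def_not | apply def_imp
  | apply def_all | apply def_ex
  | apply def_mem; isvar_tac' | apply def_eq; isvar_tac' ]).

Theorem lemma9p2 (M : Type) (mem : M -> M -> Prop)
  (HZ : Z_minus_FTMw mem) (U V : M) :
  (exists P, forall z, mem z P <->
      exists u v, mem u U /\ mem v V /\ is_opair mem z u v) /\
  (exists F, forall z, mem z F <-> subset mem z U /\ finite_set mem z) /\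
  (exists S, forall z, mem z S <->
      exists n, in_omega mem n /\ fun_dom_is mem z n /\
        (forall x y, fapp mem z x y -> mem y U)).
Proof.
  destruct HZ as [Hext [Hpair [Hunion [Hinf [Hreg [Hsep [Hfc [Hts _]]]]]]]].
  split; [|split].
  - destruct (union2_ex _ _ Hpair Hunion U V) as [X HX].
    destruct (Hfc X) as [Y [HXY HY]].
    destruct (sepP _ _ Hsep (fun e => exists u v, mem u (e 1) /\ mem v (e 2) /\ is_opair mem (e 0) u v))
      with (env := scons U (fun _ : nat => V)) (a := Y) as [b Hb].
    { unf'. dtac'. }
    exists b. intro z. rewrite (Hb z). split; [tauto|].
    intros H. split; [|exact H]. destruct H as [u [v [Hu [Hv Hz]]]].
    apply (opair_in _ _ Hext Hpair Hunion Hinf Hreg Y HY z u v); [| |exact Hz]; apply HXY, HX; tauto.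
  - destruct (Hfc U) as [Y [HUY HY]].
    destruct (sepP _ _ Hsep (fun e => subset mem (e 0) (e 1) /\ finite_set mem (e 0)))
      with (env := fun _ : nat => U) (a := Y) as [b Hb].
    { unf'. dtac'. }
    exists b. intro z. rewrite (Hb z). split; [tauto|].
    intros [H1 H2]. split; [|split; assumption]. apply HY; [|exact H2].
    intros w Hw. apply HUY, H1, Hw.
  - destruct Hinf as [I HI].
    destruct (Hts I) as [T [HIT HT]].
    destruct (union2_ex _ _ Hpair Hunion T U) as [X HX].
    destruct (Hfc X) as [Y [HXY HY]].
    destruct (sepP _ _ Hsep (fun e => exists n, in_omega mem n /\ fun_dom_is mem (e 0) n /\
        (forall x y, fapp mem (e 0) x y -> mem y (e 1))))
      with (env := fun _ : nat => U) (a := Y) as [b Hb].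
    { unf'. dtac'. }
    exists b. intro z. rewrite (Hb z). split; [tauto|].
    intros H. split; [|exact H]. destruct H as [n [Hn [Hzn HzU]]].
    apply HY.
    + intros p Hp. destruct Hzn as [[Hz1 Hz2] Hzd].
      destruct (Hz1 p Hp) as [a [c Hac]].
      assert (Hf : fapp mem z a c) by (exists p; tauto).
      apply (opair_in _ _ Hext Hpair Hunion (ex_intro _ I HI) Hreg Y HY p a c); [| |exact Hac]; apply HXY, HX.
      * left. apply (HT n); [apply HIT, (Hn I HI)|]. apply Hzd. exists c. exact Hf.
      * right. exact (HzU _ _ Hf).
    + exact (fun_finite _ _ Hext Hpair Hunion (ex_intro _ I HI) Hreg Hsep Hfc z n Hn Hzn).
Qed.
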